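(* Given any $n$ binary sequences $\boldsymbol{\mu}: [n] \to \{0,1\}^k$, there is always an optimal solution of the AML problem (in either of its two equivalent versions) whose ancestral assignment has the form $\boldsymbol{\lambda} = \bar{\boldsymbol{\mu}}_f$ for some map $f: \{0,1\}^{[n]} \to \{0,1\}^{V-[n]}$, where $V$ is the vertex set of the tree of that solution.
   Context: $[n]=\{0,\ldots,n-1\}$; $\mathcal{T}_n$ is the set of trees whose $n$ leaves are labelled by $[n]$. AML, Version 1: given $\boldsymbol{\mu}$, find $T=(V,E)\in\mathcal{T}_n$, $\mathbf{p}:E\to[0,1/2]$ and $\boldsymbol{\lambda}:V\to\{0,1\}^k$ with $\lambda_v=\mu_v$ for all leaves $v\in[n]$, minimizing $-\log_2\prod_{e\in E}p_e^{d_e}(1-p_e)^{k-d_e}$, where $d_{u,v}=\|\lambda_u-\lambda_v\|_1$. AML, Version 2: find $T\in\mathcal{T}_n$ and such $\boldsymbol{\lambda}$ minimizing $\sum_{e\in E}H(d_e/k)$ with $H(p)=-p\log_2p-(1-p)\log_2(1-p)$ (obtained from Version 1 by setting $p_e=d_e/k$). For $1\le j\le k$, the $j$-th character of $\boldsymbol{\mu}$ is $\chi\in\{0,1\}^{[n]}$ with $\chi_u=(\mu_u)_j$. Given $f:\{0,1\}^{[n]}\to\{0,1\}^{V-[n]}$, the extension $\bar{\boldsymbol{\mu}}_f:V\to\{0,1\}^k$ is defined characterwise: for each character $\chi$ (the $j$-th), $(\bar\mu_f)_v$ has $j$-th coordinate $\chi_v$ if $v\in[n]$ and $f(\chi)_v$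 if $v\in V-[n]$. *)

(* Defs.v *)
From HB Require Import structures.
From mathcomp Require Import all_boot all_order all_algebra.
From mathcomp Require Import reals constructive_ereal exp.
Set Implicit Arguments. Unset Strict Implicit. Unset Printing Implicit Defensive.
Import Order.TTheory GRing.Theory Num.Theory.
Local Open Scope ring_scope.

(* Vertex set of a tree with n labelled leaves and m internal vertices:
   V = [n] (+) (internal vertices).  inl u is leaf u, inr w is internal w. *)
Definition vert (n m : nat) := ('I_n + 'I_m)%type.

(* a strict total order on vertices, used to list each undirected edge once *)
Definition vlt n m (x y : vert n m) : bool :=
  match x, y with
  | inl a, inl b => (a < b)%N
  | inl _, inr _ => true
  | inr _, inl _ => false
  | inr a, inr b => (a < b)%N
  end.

(* the undirected edge {x,y} of E, represented once as the ordered pair (x,y) with x < y *)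
Definition is_edge n m (E : rel (vert n m)) (e : vert n m * vert n m) : bool :=
  E e.1 e.2 && vlt e.1 e.2.

Definition deg n m (E : rel (vert n m)) (v : vert n m) : nat := #|[set w | E v w]|.

Definition leaf_labelled_tree n m (E : rel (vert n m)) : Prop :=
  [/\ (forall x y, E x y = E y x),
      (forall x, ~~ E x x),
      (forall x y, connect E x y),
      #|[set e | is_edge E e]| = (n + m).-1
    & (forall u : 'I_n, deg E (inl u) <= 1)%N /\ (forall w : 'I_m, 1 < deg E (inr w))%N].

Definition extends n m k (mu : 'I_n -> 'I_k -> bool) (lam : vert n m -> 'I_k -> bool) :=
  forall u j, lam (inl u) j = mu u j.

Definition hdist n m k (lam : vert n m -> 'I_k -> bool) (x y : vert n m) : nat :=
  (\sum_(j < k) (lam x j != lam y j))%N.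

Definition ext n m k (mu : 'I_n -> 'I_k -> bool)
  (f : {ffun 'I_n -> bool} -> {ffun 'I_m -> bool}) (v : vert n m) (j : 'I_k) : bool :=
  match v with
  | inl u => mu u j
  | inr w => f [ffun u => mu u j] w
  end.

Section Costs.
Variable R : realType.

Definition log2 (x : R) : R := ln x / ln 2.

Definition xlog2x (x : R) : R := if x == 0 then 0 else x * log2 x.

Definition Hbin (p : R) : R := - xlog2x p - xlog2x (1 - p).

Definition cost2 n m k (E : rel (vert n m)) (lam : vert n m -> 'I_k -> bool) : R :=
  \sum_(e | is_edge E e) Hbin ((hdist lam e.1 e.2)%:R / k%:R).

Definition lik1 n m k (E : rel (vert n m)) (p : vert n m * vert n m -> R)
  (lam : vert n m -> 'I_k -> bool) : R :=
  \prod_(e | is_edge E e) (p e ^+ hdist lam e.1 e.2 * (1 - p e) ^+ (k - hdist lam e.1 e.2)).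

Definition cost1 n m k (E : rel (vert n m)) (p : vert n m * vert n m -> R)
  (lam : vert n m -> 'I_k -> bool) : \bar R :=
  let P := lik1 E p lam in
  if P == 0 then +oo%E else (- log2 P)%:E.

Definition valid_p n m (E : rel (vert n m)) (p : vert n m * vert n m -> R) : Prop :=
  forall e, is_edge E e -> 0 <= p e <= 2^-1.

End Costs.

(* Main.v *)
Require Import Defs.
From HB Require Import structures.
From mathcomp Require Import all_boot all_order all_algebra.
From mathcomp Require Import reals constructive_ereal exp.
From mathcomp Require Import boolp.
From mathcomp Require Import ring lra zify.
Import Order.TTheory GRing.Theory Num.Theory.
Local Open Scope ring_scope.
Set Implicit Arguments. Unset Strict Implicit. Unset Printing Implicit Defensive.

Lemma sum_b k (b : 'I_k -> bool) : (\sum_(j < k) b j)%N = #|b|.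
Proof.
rewrite -(sum1_card b). rewrite [in RHS]big_mkcond /=. apply eq_bigr => j _. by rewrite unfold_in; case: (b j).
Qed.

Lemma prod_if (R : comPzRingType) k (b : 'I_k -> bool) (x y : R) :
  \prod_(j < k) (if b j then x else y) =
  x ^+ (\sum_(j < k) b j)%N * y ^+ (k - \sum_(j < k) b j)%N.
Proof.
rewrite sum_b (bigID b) /=.
rewrite (eq_bigr (fun=> x)); last by move=> j ->.
rewrite [X in _ * X](eq_bigr (fun=> y)); last by move=> j /negbTE ->.
rewrite !prodr_const; congr (_ * _ ^+ _).
by apply/eqP; rewrite -(eqn_add2l #|b|) cardC card_ord subnKC //; have := max_card b; rewrite card_ord.
Qed.

Section Red.
Variables (R : realType) (n k m : nat) (mu : 'I_n -> 'I_k -> bool).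
Variables (E : rel (vert n m)) (p : vert n m * vert n m -> R).

Definition phi (c : vert n m -> bool) : R :=
  \prod_(e | is_edge E e) (if c e.1 != c e.2 then p e else 1 - p e).

Lemma lik_col lam : lik1 E p lam = \prod_(j < k) phi (fun v => lam v j).
Proof. rewrite /lik1 /phi exchange_big /=. apply eq_bigr => e _. by rewrite prod_if. Qed.

Lemma phi_ext c1 c2 : (forall v, c1 v = c2 v) -> phi c1 = phi c2.
Proof. by move=> H; apply eq_bigr => e _; rewrite !H. Qed.

Hypothesis p01 : forall e, is_edge E e -> 0 <= p e <= 1.

Lemma phi_ge0 c : 0 <= phi c.
Proof.
apply prodr_ge0 => e He; have /andP[p0 p1] := p01 He.
by case: ifP => _ //; rewrite subr_ge0.
Qed.

Lemma reduce lam : extends mu lam -> exists f, lik1 E p lam <= lik1 E p (ext mu f).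
Proof.
move=> Hext.
pose chi := fun j : 'I_k => [ffun u => mu u j].
pose js := fun j : 'I_k => [arg max_(i > j | chi i == chi j) phi (fun v => lam v i)]%O.
pose f := fun c : {ffun 'I_n -> bool} =>
  if [pick j | chi j == c] is Some j then [ffun w => lam (inr w) (js j)] else [ffun => false].
have Hf : forall j, exists j', chi j' = chi j /\ f (chi j) = [ffun w => lam (inr w) (js j')].
  move=> j; rewrite /f; case: pickP => [j' /eqP Hj'|H]; first by exists j'.
  by have := H j; rewrite eqxx.
exists f; rewrite !lik_col; apply ler_prod => j _; rewrite phi_ge0 /=.
have [j' [Hj' Hfj]] := Hf j.
rewrite /js in Hfj.
case: (@arg_maxP _ _ _ j' (fun i => chi i == chi j') (fun i => phi (fun v => lam v i)) (eqxx (chi j'))) Hfj => i /eqP Hi Hmax Hfj.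
rewrite (@phi_ext (fun v => ext mu f v j) (fun v => lam v i)).
  by apply: Hmax; rewrite Hj'.
case=> [u|w] /=.
  rewrite Hext. have := congr1 (fun g : {ffun 'I_n -> bool} => g u) (etrans Hi Hj').
  by rewrite /chi !ffunE.
by rewrite -/(chi j) Hfj ffunE.
Qed.
End Red.

Lemma sum_lt k d : (\sum_(j < k) (j < d)%N)%N = minn k d.
Proof.
elim: k => [|k IH]; first by rewrite big_ord0 min0n.
rewrite big_ord_recr /= IH. case: (ltnP k d) => H /=; lia.
Qed.

Lemma sum_if (R : pzRingType) k (b : 'I_k -> bool) (x y : R) :
  \sum_(j < k) (if b j then x else y) =
  x *+ (\sum_(j < k) b j)%N + y *+ (k - \sum_(j < k) b j)%N.
Proof.
rewrite sum_b (bigID b) /=.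
rewrite (eq_bigr (fun=> x)); last by move=> j ->.
rewrite [X in _ + X](eq_bigr (fun=> y)); last by move=> j /negbTE ->.
rewrite !sumr_const; congr (_ + _ *+ _).
by apply/eqP; rewrite -(eqn_add2l #|b|) cardC card_ord subnKC //; have := max_card b; rewrite card_ord.
Qed.

Lemma sum_id (R: fieldType) (p kr dr : R) : dr != 0 -> kr != 0 -> kr - dr != 0 ->
  p/(dr/kr) * dr + (1-p)/(1 - dr/kr) * (kr - dr) = kr.
Proof.
move=> H1 H2 H3.
have -> : 1 - dr/kr = (kr - dr)/kr by field.
field. by rewrite H1 H2 H3.
Qed.

Section Gibbs.
Variable R : realType.

Lemma gibbs2 (k d : nat) (p : R) : (0 < k)%N -> (d <= k)%N -> 0 <= p <= 1 ->
  p ^+ d * (1 - p) ^+ (k - d) <= (d%:R / k%:R) ^+ d * (1 - d%:R / k%:R) ^+ (k - d).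
Proof.
move=> k0 dk /andP[p0 p1].
have kr0 : (0 : R) < k%:R by rewrite ltr0n.
have p1' : 0 <= 1 - p by rewrite subr_ge0.
case: (posnP d) => [->|d0].
  rewrite mul0r expr0 !mul1r subr0 expr1n subn0. by apply: exprn_ile1 => //; lra.
have [dk'|->] : (d < k)%N \/ d = k by lia.
  2:{
  rewrite divff ?pnatr_eq0 -?lt0n // subnn !expr0 !mulr1 expr1n. by apply: exprn_ile1 => //; lra. }
set q := d%:R / k%:R.
have q0 : 0 < q by rewrite divr_gt0 // ltr0n.
have q1 : q < 1 by rewrite ltr_pdivrMr // mul1r ltr_nat.
have q1' : 0 < 1 - q by rewrite subr_gt0.
pose E := fun i : 'I_k => if (i < d)%N then p / q else (1 - p) / (1 - q).
have E0 : {in predT, forall i, 0 <= E i}.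
  move=> i _; rewrite /E; case: ifP => _; apply: divr_ge0 => //; exact: ltW.
have := (leif_AGM E0).1.
rewrite card_ord (eq_bigl xpredT) // [X in _ <= (X / _) ^+ _ -> _](eq_bigl xpredT) //.
rewrite /E (prod_if (fun i : 'I_k => (i < d)%N)) (sum_if (fun i : 'I_k => (i < d)%N)) sum_lt (minn_idPr (ltnW dk')).
have -> : (p / q) *+ d + (1 - p) / (1 - q) *+ (k - d) = k%:R.
  rewrite /q -[_ *+ d]mulr_natr -[_ *+ (k - d)]mulr_natr natrB ?(ltnW dk') //.
  apply: sum_id; first by rewrite pnatr_eq0 -lt0n.
    by rewrite pnatr_eq0 -lt0n.
  by rewrite -natrB ?(ltnW dk') // pnatr_eq0 subn_eq0 -ltnNge.
rewrite divff ?expr1n; last by rewrite gt_eqF.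
clearbody q.
rewrite !expr_div_n mulf_div => H.
by move: H; rewrite ler_pdivrMr ?mulr_gt0 ?exprn_gt0 // mul1r.
Qed.

Definition q1 (k d : nat) : R := if (d.*2 <= k)%N then d%:R / k%:R else 2^-1.

Lemma gibbs1 (k d : nat) (p : R) : (0 < k)%N -> (d <= k)%N -> 0 <= p <= 2^-1 ->
  p ^+ d * (1 - p) ^+ (k - d) <= q1 k d ^+ d * (1 - q1 k d) ^+ (k - d).
Proof.
move=> k0 dk /andP[p0 p1]. rewrite /q1.
case: ifP => Hd.
  apply: gibbs2 => //; rewrite p0 /=; apply: (le_trans p1); rewrite invf_le1 ?ler1n //.
have h2 : 1 - 2^-1 = 2^-1 :> R by field.
rewrite h2.
have [a Ha] : exists a, d = (a + (k - d))%N by exists (d - (k - d))%N; move: Hd; rewrite -addnn; lia.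
rewrite {1 3}Ha !exprD -!mulrA -!exprMn.
have h0 : (0 : R) <= 2^-1 by rewrite invr_ge0 ler0n.
apply: ler_pM; rewrite ?exprn_ge0 ?mulr_ge0 ?subr_ge0 //; try lra.
  by apply: lerXn2r; rewrite ?nnegrE.
apply: lerXn2r; rewrite ?nnegrE ?mulr_ge0 ?subr_ge0 //; try lra.
nra.
Qed.

End Gibbs.

Lemma pow_small (R : realType) (a v : R) : 0 <= a -> a < 1 -> 0 < v -> exists N, a ^+ N < v.
Proof.
move=> a0 a1 v0.
case: (a =P 0) => [->|an0]; first by exists 1%N; rewrite expr1.
have a0' : 0 < a by rewrite lt_neqAle eq_sym a0 andbT; apply/eqP.
set c := a^-1 - 1.
have c0 : 0 < c by rewrite subr_gt0 invf_gt1.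
have bern : forall N, 1 + N%:R * c <= (a^-1) ^+ N.
  elim => [|N IH]; first by rewrite mul0r addr0 expr0.
  have ha : a^-1 = 1 + c by rewrite /c addrC subrK.
  have hp : 0 <= (a^-1) ^+ N by rewrite exprn_ge0 // invr_ge0.
  have hN : (0:R) <= N%:R by rewrite ler0n.
  rewrite exprSr -addn1 natrD. move: IH hp c0 hN; clearbody c; rewrite {}ha.
  set X := _ ^+ N; set Y := N%:R => IH hp c0 hN. nra.
have vc : 0 <= (v * c)^-1 by rewrite invr_ge0 mulr_ge0 // ltW.
have HN := archi_boundP vc.
exists (Num.Def.archi_bound (v * c)^-1).
set N := Num.Def.archi_bound _ in HN *.
have H : v^-1 < (a^-1) ^+ N.
  apply: (lt_le_trans _ (bern N)).
  have : (v * c)^-1 * c < N%:R * c by rewrite ltr_pM2r.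
  rewrite invfM -mulrA mulVf ?gt_eqF // mulr1 => H. lra.
have -> : a ^+ N = ((a^-1) ^+ N)^-1 by rewrite exprVn invrK.
by rewrite invf_plt ?posrE ?exprn_gt0 ?invr_gt0.
Qed.

Lemma bound_below1 (R : realType) (I : finType) (F : I -> R) :
  exists a, 0 <= a /\ a < 1 /\ forall i, F i < 1 -> F i <= a.
Proof.
exists (\big[Num.max/0]_(i | F i < 1) F i); split; last split.
- elim/big_rec: _ => // i x _ Hx; by rewrite le_max Hx orbT.
- elim/big_rec: _ => // i x Hi Hx; by rewrite gt_max Hi Hx.
- move=> i Hi; rewrite (bigD1 i) //= le_max lexx //.
Qed.

Section Max.
Variables (R : realType) (n k : nat) (mu : 'I_n -> 'I_k -> bool) (h : nat -> R).
Hypotheses (h0 : forall d, 0 < h d) (h1 : forall d, h d <= 1).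

Lemma hdist_le m (lam : vert n m -> 'I_k -> bool) x y : (hdist lam x y <= k)%N.
Proof.
rewrite /hdist; apply: (@leq_trans (\sum_(j < k) 1)%N).
  by apply: leq_sum => j _; exact: leq_b1.
by rewrite sum_nat_const card_ord muln1.
Qed.

Definition Lv m (E : rel (vert n m)) (lam : vert n m -> 'I_k -> bool) : R := \prod_(e | is_edge E e) h (hdist lam e.1 e.2).
Definition cnt m (E : rel (vert n m)) (lam : vert n m -> 'I_k -> bool) (j : 'I_k.+1) :=
  #|[pred e | is_edge E e && (inord (hdist lam e.1 e.2) == j)]|.

Lemma Lv_cnt m E lam : @Lv m E lam = \prod_(j < k.+1) h j ^+ cnt E lam j.
Proof.
rewrite /Lv (partition_big (fun e => inord (hdist lam e.1 e.2) : 'I_k.+1) xpredT) //=.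
apply eq_bigr => j _. rewrite (eq_bigr (fun=> h j)); last first.
  by move=> e /andP[_ /eqP <-]; rewrite inordK // ltnS hdist_le.
by rewrite prodr_const.
Qed.

Lemma Lv_ge0 m E lam : 0 <= @Lv m E lam.
Proof. by apply prodr_ge0 => e _; apply ltW. Qed.

Lemma Lv_single m E lam (j : 'I_k.+1) : @Lv m E lam <= h j ^+ cnt E lam j.
Proof.
rewrite Lv_cnt (bigD1 j) //=; apply: ler_piMr; first by rewrite exprn_ge0 // ltW.
apply prodr_ile1 => i _; apply/andP; split; first by rewrite exprn_ge0 // ltW.
apply: exprn_ile1; [exact: ltW | exact: h1].
Qed.

Definition cand m (E : rel (vert n m)) (lam : vert n m -> 'I_k -> bool) := leaf_labelled_tree E /\ extends mu lam.

Lemma max_exists : (exists m E lam, @cand m E lam) ->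
  exists m E lam, @cand m E lam /\
    forall m' E' lam', @cand m' E' lam' -> @Lv m' E' lam' <= @Lv m E lam.
Proof.
move=> [m0 [E0 [lam0 C0]]].
set v0 := Lv E0 lam0.
have v0p : 0 < v0 by apply prodr_gt0 => e _.
have [a [a0 [a1 Ha]]] := bound_below1 (fun j : 'I_k.+1 => h j).
have [N HN] := pow_small a0 a1 v0p.
have cntN : forall m E lam (j : 'I_k.+1), v0 <= @Lv m E lam -> h j < 1 -> (cnt E lam j <= N)%N.
  move=> m E lam j Hv Hj; rewrite leqNgt; apply/negP => Hc.
  have : h j ^+ cnt E lam j <= a ^+ N.
    apply: (le_trans (y := a ^+ cnt E lam j)).
      apply: lerXn2r; rewrite ?nnegrE; [exact: ltW | by [] | exact: Ha].
    by apply: ler_wiXn2l => //; [exact: ltW | exact: ltnW].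
  move: (le_trans Hv (Lv_single E lam j)) => H1 H2.
  have := lt_le_trans (le_lt_trans (le_trans H1 H2) HN) (lexx v0). by rewrite ltxx.
pose kf := fun m (E : rel (vert n m)) (lam : vert n m -> 'I_k -> bool) =>
  [ffun j : 'I_k.+1 => (inord (if h j < 1 then @cnt m E lam j else 0%N) : 'I_N.+1)].
pose G (c : {ffun 'I_k.+1 -> 'I_N.+1}) : R := \prod_(j < k.+1) h j ^+ c j.
have LG : forall m E lam, v0 <= @Lv m E lam -> Lv E lam = G (kf m E lam).
  move=> m E lam Hv; rewrite Lv_cnt /G; apply eq_bigr => j _; rewrite ffunE.
  case: ifP => Hj; first by rewrite inordK // ltnS cntN.
  have -> : h j = 1 by apply/eqP; rewrite eq_le h1 leNgt Hj.
  by rewrite !expr1n.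
pose S := fun c => `[< exists m E lam, @cand m E lam /\ v0 <= Lv E lam /\ kf m E lam = c >].
have S0 : S (kf m0 E0 lam0) by apply/asboolP; exists m0, E0, lam0.
case: (@arg_maxP _ _ _ _ S G S0) => c /asboolP [m [E [lam [C [Hv Hc]]]]] Hmax.
exists m, E, lam; split => // m' E' lam' C'.
case: (leP v0 (Lv E' lam')) => Hv'; last by apply: ltW; apply: (lt_le_trans Hv').
rewrite LG // LG // Hc; apply: Hmax; apply/asboolP; by exists m', E', lam'.
Qed.
End Max.

Lemma tree1 : @leaf_labelled_tree 1 0 (fun _ _ => false).
Proof.
have vE : forall x : vert 1 0, x = inl ord0.
  by case=> [u|[]] //; rewrite (ord1 u).
split => //.
- by move=> x y; rewrite (vE x) (vE y) connect0.
- rewrite (eq_card0 (A := mem [set e | is_edge (fun _ _ : vert 1 0 => false) e])) //.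
  by move=> e; rewrite inE.
- split; last by case.
  move=> u; rewrite /deg (eq_card0 (A := mem [set w | (fun _ _ : vert 1 0 => false) (inl u) w])) //.
  by move=> e; rewrite inE.
Qed.

Definition starE n : rel (vert n 1) := fun x y =>
  match x, y with inl _, inr _ => true | inr _, inl _ => true | _, _ => false end.

Arguments starE n : clear implicits.

Lemma tree_star n : (1 < n)%N -> leaf_labelled_tree (starE n).
Proof.
move=> n1.
have c0 : forall x, connect (starE n) x (inr ord0).
  case=> [u|w]; first by apply: connect1.
  by rewrite (ord1 w) connect0.
split.
- by case=> [?|?] [?|?].
- by case.
- move=> x y; apply: (connect_trans (c0 x)).
  case: y => [u|w]; first by apply: connect1.
  by rewrite (ord1 w) connect0.
- have -> : [set e | is_edge (starE n) e] = [set (inl u, inr ord0) | u : 'I_n].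
    apply/setP => [[x y]]; rewrite inE /is_edge /=.
    case: x => [u|w]; case: y => [u'|w'] /=.
    + apply/esym/imsetP => [[v _]] //.
    + rewrite (ord1 w'); apply/esym/imsetP; by exists u.
    + apply/esym/imsetP => [[v _]] //.
    + apply/esym/imsetP => [[v _]] //.
  rewrite card_imset ?card_ord ?addn1 //.
  by move=> u v [].
- split.
  + move=> u; rewrite /deg.
    have -> : [set w | starE n (inl u) w] = [set inr ord0].
      apply/setP => w; rewrite !inE; case: w => [?|w] //=.
      by rewrite (ord1 w) eqxx.
    by rewrite cards1.
  + move=> w; rewrite /deg.
    have -> : [set v | starE n (inr w) v] = [set inl u | u : 'I_n].
      apply/setP => v; rewrite !inE; case: v => [u|w'] /=.
        by apply/esym/imsetP; exists u.
      by apply/esym/imsetP => [[v _]].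
    by rewrite card_imset ?card_ord // => u v [].
Qed.

Section H.
Variables (R : realType) (k : nat).
Hypothesis k0 : (0 < k)%N.

Definition h1 (d : nat) : R := q1 R k d ^+ d * (1 - q1 R k d) ^+ (k - d).
Definition q2 (d : nat) : R := d%:R / k%:R.
Definition h2 (d : nat) : R := if (d <= k)%N then q2 d ^+ d * (1 - q2 d) ^+ (k - d) else 1.

Lemma kr0 : (0 : R) < k%:R. Proof. by rewrite ltr0n. Qed.

Lemma q1_range d : 0 <= q1 R k d <= 2^-1.
Proof.
rewrite /q1; case: ifP => H; last by rewrite lexx andbT invr_ge0 ler0n.
rewrite divr_ge0 ?ler0n //= ler_pdivrMr ?kr0 //.
have : ((d.*2)%:R <= k%:R :> R) by rewrite ler_nat.
rewrite -muln2 natrM => H'. lra.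
Qed.

Lemma q2_range d : (d <= k)%N -> 0 <= q2 d <= 1.
Proof.
move=> dk; rewrite /q2 divr_ge0 ?ler0n //= ler_pdivrMr ?kr0 // mul1r ler_nat //.
Qed.

Lemma h1_range d : 0 < h1 d <= 1.
Proof.
have /andP[a b] := q1_range d.
have c : 0 < 1 - q1 R k d.
  have : (2^-1 : R) < 1 by rewrite invf_lt1 ?ltr1n.
  move=> H; lra.
rewrite /h1; apply/andP; split.
  apply: mulr_gt0; last exact: exprn_gt0.
  case: (posnP d) => [->|d0]; first by rewrite expr0.
  apply: exprn_gt0; rewrite lt_neqAle a andbT eq_sym /q1.
  case: ifP => _; last by rewrite invr_eq0 pnatr_eq0.
  by rewrite mulf_neq0 ?invr_eq0 ?pnatr_eq0 -?lt0n.
have h21 : (2^-1 : R) < 1 by rewrite invf_lt1 ?ltr1n.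
apply: mulr_ile1.
- exact: exprn_ge0.
- apply: exprn_ge0; exact: ltW.
- apply: exprn_ile1 => //; lra.
- apply: exprn_ile1; lra.
Qed.

Lemma h2_range d : 0 < h2 d <= 1.
Proof.
rewrite /h2; case: ifP => dk; last by rewrite ltr01 lexx.
have /andP[a b] := q2_range dk.
apply/andP; split; last first.
  apply: mulr_ile1; rewrite ?exprn_ge0 ?subr_ge0 //; apply: exprn_ile1; rewrite ?subr_ge0 //; lra.
apply: mulr_gt0.
  case: (posnP d) => [->|d0]; first by rewrite expr0.
  by apply: exprn_gt0; rewrite /q2 divr_gt0 ?ltr0n.
case: (ltngtP d k) dk => // [dk' _|-> _]; last by rewrite subnn expr0.
apply: exprn_gt0; rewrite subr_gt0 /q2 ltr_pdivrMr ?kr0 // mul1r ltr_nat //.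
Qed.

End H.

Lemma ln_prod (R : realType) (I : finType) (P : pred I) (F : I -> R) :
  (forall i, P i -> 0 < F i) ->
  0 < \prod_(i | P i) F i /\ ln (\prod_(i | P i) F i) = \sum_(i | P i) ln (F i).
Proof.
move=> HF.
apply: (big_rec2 (fun x y => 0 < x /\ ln x = y)); first by rewrite ln1.
move=> i x y Pi [x0 <-]; split; first by rewrite mulr_gt0 ?HF.
by rewrite lnM // posrE ?HF.
Qed.

Section C.
Variables (R : realType) (k : nat).
Hypothesis k0 : (0 < k)%N.

Lemma log2M (x y : R) : 0 < x -> 0 < y -> log2 (x * y) = log2 x + log2 y.
Proof. by move=> x0 y0; rewrite /log2 lnM ?posrE // mulrDl. Qed.
Lemma log2Xn (x : R) j : 0 < x -> log2 (x ^+ j) = log2 x *+ j.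
Proof. by move=> x0; rewrite /log2 lnXn // mulrnAl. Qed.
Lemma log21 : log2 (1 : R) = 0.
Proof. by rewrite /log2 ln1 mul0r. Qed.

Lemma Hbin_h2 d : (d <= k)%N -> Hbin (q2 R k d) = - (k%:R^-1 * log2 (h2 R k d)).
Proof.
move=> dk; rewrite /h2 dk /Hbin /xlog2x.
have kr : (k%:R : R) != 0 by rewrite pnatr_eq0 -lt0n.
case: (posnP d) => [->|d0].
  rewrite /q2 mul0r eqxx subr0 oner_eq0 expr0 expr1n mul1r log21 mul1r; lra.
case: (ltngtP d k) dk => // [dk _|-> _]; last first.
  rewrite /q2 divff // subrr oner_eq0 eqxx subnn !expr0 mulr1 expr1n log21 mul1r; lra.

have q0 : 0 < q2 R k d by rewrite /q2 divr_gt0 ?ltr0n.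
have q1' : 0 < 1 - q2 R k d by rewrite subr_gt0 /q2 ltr_pdivrMr ?ltr0n // mul1r ltr_nat.
rewrite gt_eqF // gt_eqF // log2M ?exprn_gt0 // !log2Xn //.
have e1 : 1 - q2 R k d = (k - d)%:R / k%:R by rewrite /q2 natrB ?(ltnW dk) //; field.
have e2 : q2 R k d = d%:R / k%:R by [].
set L1 := log2 (q2 R k d); set L2 := log2 (1 - q2 R k d).
rewrite {1}e2 {1}e1 -[L1 *+ _]mulr_natl -[L2 *+ _]mulr_natl. field.
by [].
Qed.

End C.

Lemma log2_le (R : realType) (x y : R) : 0 < x -> x <= y -> log2 x <= log2 y.
Proof.
move=> x0 xy; rewrite /log2 ler_pM2r ?invr_gt0 ?ln_gt0 ?ltr1n //.
by rewrite ler_ln ?posrE // (lt_le_trans x0).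
Qed.

Lemma cost2_Lv (R : realType) n k m (E : rel (vert n m)) (lam : vert n m -> 'I_k -> bool) :
  (0 < k)%N -> cost2 R E lam = - (k%:R^-1 * log2 (Lv (h2 R k) E lam)).
Proof.
move=> k0.
have [_ Hl] := ln_prod (P := is_edge E) (F := fun e => h2 R k (hdist lam e.1 e.2))
   (fun e _ => proj1 (andP (h2_range R k0 _))).
rewrite /Lv /log2 Hl mulr_suml mulr_sumr -sumrN /cost2.
apply eq_bigr => e _.
by rewrite (Hbin_h2 R k0 (hdist_le lam e.1 e.2)).
Qed.

Lemma cost_mono (R : realType) (P P' : R) : 0 <= P' -> P' <= P ->
  ((if P == 0%R then +oo else (- log2 P)%:E) <= (if P' == 0%R then +oo else (- log2 P')%:E))%E.
Proof.
move=> P'0 HP.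
case: (boolP (P' == 0%R)) => [_|P'n0]; first by rewrite leey.
have P'p : (0 < P')%R by rewrite lt_neqAle P'0 andbT eq_sym.
have Pp : (0 < P)%R by exact: lt_le_trans P'p HP.
rewrite (gt_eqF Pp).
by rewrite lee_fin lerN2 log2_le.
Qed.

Unset Implicit Arguments.

Theorem proposition1 (R : realType) (n k : nat) (mu : 'I_n -> 'I_k -> bool)
    (hn : (0 < n)%N) (hk : (0 < k)%N) :
  (* Version 1 *)
  (exists (m : nat) (E : rel (vert n m)) (p : vert n m * vert n m -> R)
          (f : {ffun 'I_n -> bool} -> {ffun 'I_m -> bool}),
      [/\ leaf_labelled_tree E, valid_p E p &
       forall (m' : nat) (E' : rel (vert n m')) (p' : vert n m' * vert n m' -> R)
              (lam' : vert n m' -> 'I_k -> bool),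
         leaf_labelled_tree E' -> valid_p E' p' -> extends mu lam' ->
         (cost1 E p (ext mu f) <= cost1 E' p' lam')%E])
  /\
  (* Version 2 *)
  (exists (m : nat) (E : rel (vert n m))
          (f : {ffun 'I_n -> bool} -> {ffun 'I_m -> bool}),
      leaf_labelled_tree E /\
       forall (m' : nat) (E' : rel (vert n m')) (lam' : vert n m' -> 'I_k -> bool),
         leaf_labelled_tree E' -> extends mu lam' ->
         cost2 R E (ext mu f) <= cost2 R E' lam').
Proof.
have cand0 : exists m (E : rel (vert n m)) lam, cand mu E lam.
  have [n1|n2] : n = 1%N \/ (1 < n)%N by lia.
    subst n; exists 0%N, (fun _ _ => false),
      (fun v j => match v with inl u => mu u j | inr _ => false end).
    by split; [exact: tree1 | by []].
  exists 1%N, (starE n), (fun v j => match v with inl u => mu u j | inr _ => false end).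
  by split; [exact: tree_star | by []].
have half1 : (2^-1 : R) <= 1 by rewrite invf_le1 ?ler1n ?ltr0n.
split.
- have [m [E [lam [[T Ex] Hmax]]]] := max_exists (h := h1 R k) (mu := mu)
     (fun d => proj1 (andP (h1_range R hk d))) (fun d => proj2 (andP (h1_range R hk d))) cand0.
  pose p := fun e : vert n m * vert n m => q1 R k (hdist lam e.1 e.2).
  have p01 : forall e, is_edge E e -> 0 <= p e <= 1.
    move=> e _; have /andP[a b] := q1_range R hk (hdist lam e.1 e.2).
    by rewrite a (le_trans b half1).
  have [f Hf] := reduce p01 Ex.
  exists m, E, p, f; split => //; first by move=> e _; exact: q1_range.
  move=> m' E' p' lam' T' V' Ex'.
  have H1 : lik1 E' p' lam' <= Lv (h1 R k) E' lam'.
    apply: ler_prod => e He; have /andP[a b] := V' e He.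
    rewrite mulr_ge0 ?exprn_ge0 //=; last by rewrite subr_ge0 (le_trans b half1).
    apply: gibbs1 => //; [exact: hdist_le | by rewrite a b].
  have H2 := Hmax m' E' lam' (conj T' Ex').
  have HP : lik1 E' p' lam' <= lik1 E p (ext mu f) by apply: (le_trans H1); apply: (le_trans H2).
  have P'0 : 0 <= lik1 E' p' lam'.
    apply: prodr_ge0 => e He; have /andP[a b] := V' e He.
    by rewrite mulr_ge0 ?exprn_ge0 // subr_ge0 (le_trans b half1).
  exact: (@cost_mono R _ _ P'0 HP).
- have [m [E [lam [[T Ex] Hmax]]]] := max_exists (h := h2 R k) (mu := mu)
     (fun d => proj1 (andP (h2_range R hk d))) (fun d => proj2 (andP (h2_range R hk d))) cand0.
  pose p := fun e : vert n m * vert n m => q2 R k (hdist lam e.1 e.2).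
  have p01 : forall e, is_edge E e -> 0 <= p e <= 1.
    by move=> e _; apply: (q2_range R hk); exact: hdist_le.
  have [f Hf] := reduce p01 Ex.
  exists m, E, f; split => // m' E' lam' T' Ex'.
  rewrite !cost2_Lv // lerN2 ler_pM2l ?invr_gt0 ?ltr0n //.
  have H2 := Hmax m' E' lam' (conj T' Ex').
  have H3 : Lv (h2 R k) E lam = lik1 E p lam.
    by apply: eq_bigr => e _; rewrite /h2 hdist_le.
  have H4 : lik1 E p (ext mu f) <= Lv (h2 R k) E (ext mu f).
    apply: ler_prod => e He; have /andP[a b] := p01 e He.
    rewrite mulr_ge0 ?exprn_ge0 ?subr_ge0 //= /h2 hdist_le.
    by apply: gibbs2 => //; [exact: hdist_le | by rewrite a b].
  apply: log2_le; first by apply: prodr_gt0 => e _; have /andP[] := h2_range R hk (hdist lam' e.1 e.2).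
  apply: (le_trans H2); rewrite H3; exact: (le_trans Hf H4).
Qed.
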